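(* For every instance (strip $T=[0,w]\times[0,h]$ with $1<w\le 2$, $h>1$, and reals $\frac12\le y_1<\dots<y_n\le h-\frac12$), there is a staircase layout with positive gap.
   Context: A layout is a pair $(\mathbf x,\prec)$ where $\mathbf x=(x_1,\dots,x_n)$ with $x_i\in[\frac12,w-\frac12]$, and $\prec$ is a total order (stacking order) on the squares $s_1,\dots,s_n$, where $s_i$ is the closed axis-parallel unit square with centre $(x_i,y_i)$. If $s_i\prec s_j$ we say $s_j$ is in front of $s_i$ and $s_i$ is behind $s_j$. A point $p$ on the boundary of $s_i$ is visible if every square $s_j$ ($j\neq i$) containing $p$ is behind $s_i$. The visible perimeter of $s_i$ is the total length of its visible boundary points; the gap of $s_i$ is its visible perimeter minus $2$, and the gap of a layout is the minimum of the gaps of its squares. A staircase is a layout in which $x_1\le x_2\le\dots\le x_n$ or $x_1\ge x_2\ge\dots\ge x_n$, and in which $s_1\prec s_2\prec\dots\prec s_n$ or $s_1\succ s_2\succ\dots\succ s_n$. *)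

(* Defs.v *)
From HB Require Import structures.
From mathcomp Require Import all_boot all_order all_algebra perm.
From mathcomp Require Import all_classical all_reals all_analysis.
Set Implicit Arguments. Unset Strict Implicit. Unset Printing Implicit Defensive.
Import Order.TTheory GRing.Theory Num.Theory.
Local Open Scope classical_set_scope.
Local Open Scope ring_scope.

(* Squares are indexed by 'I_n (s_1..s_n ~ indices 0..n-1).
   A layout is (x, sigma): x i is the abscissa of the centre of s_i and the
   stacking order is  s_i < s_j  iff  sigma i < sigma j  (a total order). *)

Definition in_square (R : realType) (c p : R * R) : Prop :=
  `|p.1 - c.1| <= 2^-1 /\ `|p.2 - c.2| <= 2^-1.

Definition behind n (sigma : {perm 'I_n}) (j i : 'I_n) : bool :=
  (sigma j < sigma i)%N.

Definition visible (R : realType) n (x y : 'I_n -> R) (sigma : {perm 'I_n})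
  (i : 'I_n) (p : R * R) : Prop :=
  forall j : 'I_n, j != i -> in_square (x j, y j) p -> behind sigma j i.

Definition side_pt (R : realType) (c : R * R) (k : nat) (t : R) : R * R :=
  match k with
  | 0%N => (c.1 - 2^-1 + t, c.2 - 2^-1)
  | 1%N => (c.1 + 2^-1, c.2 - 2^-1 + t)
  | 2%N => (c.1 - 2^-1 + t, c.2 + 2^-1)
  | _ => (c.1 - 2^-1, c.2 - 2^-1 + t)
  end.

(* visible perimeter of s_i: total length (Lebesgue measure) of the visible
   boundary points, computed side by side (corners are null sets). *)
Definition visible_perimeter (R : realType) n (x y : 'I_n -> R)
  (sigma : {perm 'I_n}) (i : 'I_n) : \bar R :=
  (\sum_(k < 4)
     (@lebesgue_measure R)
       [set t : R | (0 <= t <= 1)%R /\ visible x y sigma i (side_pt (x i, y i) k t)])%E.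

Definition sq_gap (R : realType) n (x y : 'I_n -> R) (sigma : {perm 'I_n})
  (i : 'I_n) : \bar R :=
  (visible_perimeter x y sigma i - 2%:E)%E.

Definition layout_gap (R : realType) n (x y : 'I_n -> R) (sigma : {perm 'I_n})
  : \bar R :=
  \big[Order.min/+oo%E]_(i < n) sq_gap x y sigma i.

Definition is_layout (R : realType) n (w : R) (x : 'I_n -> R) : Prop :=
  forall i, 2^-1 <= x i <= w - 2^-1.

Definition staircase (R : realType) n (x : 'I_n -> R) (sigma : {perm 'I_n})
  : Prop :=
  ((forall i j : 'I_n, (i <= j)%N -> x i <= x j) \/
   (forall i j : 'I_n, (i <= j)%N -> x j <= x i)) /\
  ((forall i j : 'I_n, (i < j)%N -> behind sigma i j) \/
   (forall i j : 'I_n, (i < j)%N -> behind sigma j i)).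

(* Main.v *)
Require Import Defs.
From HB Require Import structures.
From mathcomp Require Import all_boot all_order all_algebra perm.
From mathcomp Require Import all_classical all_reals all_analysis.
From mathcomp Require Import lra.
Import Order.TTheory GRing.Theory Num.Theory.
Local Open Scope ring_scope.
Local Open Scope classical_set_scope.

Lemma meas_ge (R : realType) (A : set R) (a b : R) : a < b ->
  (forall t, a <= t <= b -> A t) -> ((b - a)%:E <= lebesgue_measure A)%E.
Proof.
move=> ab H.
have -> : (b - a)%:E = lebesgue_measure `[a, b] by rewrite lebesgue_measure_itv /= lte_fin ab -EFinB.
rewrite /lebesgue_measure /lebesgue_stieltjes_measure /=.
apply: le_outer_measure => t /=. rewrite in_itv /= => /andP[? ?]. apply: H. by apply/andP.
Qed.

Lemma meas_ge0 (R : realType) (A : set R) : (0 <= lebesgue_measure A)%E.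
Proof. exact: measure_ge0. Qed.

Theorem lemma1 (R : realType) (w h : R) (n : nat) (y : 'I_n -> R) :
  1 < w -> w <= 2 -> 1 < h ->
  (forall i j : 'I_n, (i < j)%N -> y i < y j) ->
  (forall i : 'I_n, 2^-1 <= y i <= h - 2^-1) ->
  exists (x : 'I_n -> R) (sigma : {perm 'I_n}),
    is_layout w x /\ staircase x sigma /\ (0 < layout_gap x y sigma)%E.
Proof.
move=> w1 w2 h1 yinc yb.
set d := (w - 1) / (n%:R + 1).
have n1 : (0 < n%:R + 1 :> R) by rewrite ltr_pwDr // ler0n.
have d0 : 0 < d by rewrite divr_gt0 // subr_gt0.
have dn : d * (n%:R + 1) = w - 1 by rewrite /d divfK // gt_eqF.
have d1 : d <= 1.
  have : d <= d * (n%:R + 1).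
    by apply: ler_peMr; [exact: ltW | have := ler0n R n; lra].
  rewrite dn; lra.
pose x := fun i : 'I_n => 2^-1 + d * (i : nat)%:R.
have xle : forall i j : 'I_n, (i <= j)%N -> x i <= x j.
  move=> i j ij; rewrite /x lerD2l ler_pM2l // ler_nat //.
have xlt : forall i j : 'I_n, (i < j)%N -> x i + d <= x j.
  move=> i j ij; rewrite /x -addrA lerD2l -[X in _ + X]mulr1 -mulrDr ler_pM2l //.
  by rewrite natr1 ler_nat.
exists x, 1%g; split; [|split].
- move=> i; rewrite /x lerDl mulr_ge0 ?ler0n ?ltW //=.
  have : (d * (i : nat)%:R < d * (n%:R + 1)).
    rewrite ltr_pM2l // natr1 ltr_nat; apply: leq_trans (ltn_ord i) _; exact: leqnSn.
  rewrite dn => H. lra.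
- split; first by left.
  by left => i j ij; rewrite /behind !perm1.
apply: lt_bigmin => // i _.
rewrite /sq_gap sube_gt0 /visible_perimeter !big_ord_recr big_ord0 /=.
have vis : forall p, (forall j : 'I_n, (i < j)%N -> ~ in_square (x j, y j) p) -> visible x y 1 i p.
  move=> p Hp j ji hj; rewrite /behind !perm1 ltnNge; apply/negP => ij.
  have ij' : (i < j)%N.
    rewrite ltn_neqAle ij andbT; apply: contra ji => /eqP H; apply/eqP; exact: val_inj.
  exact: (Hp j ij' hj).
have B : ((1 - 0)%:E <= lebesgue_measure
      ([set t : R | 0 <= t <= 1 /\ visible x y 1 i (x i - 2^-1 + t, y i - 2^-1)])%R)%E.
  apply: meas_ge => // t ht; split => //; apply: vis => j ij [_ /=].
  have := yinc _ _ ij; rewrite ler_norml => ? /andP[? ?]; lra.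
have L : ((1 - 0)%:E <= lebesgue_measure
      ([set t : R | 0 <= t <= 1 /\ visible x y 1 i (x i - 2^-1, y i - 2^-1 + t)])%R)%E.
  apply: meas_ge => // t ht; split => //; apply: vis => j ij [/= + _].
  have := xlt _ _ ij; rewrite ler_norml => ? /andP[? ?]; lra.
have T : ((d / 2 - 0)%:E <= lebesgue_measure
      ([set t : R | 0 <= t <= 1 /\ visible x y 1 i (x i - 2^-1 + t, y i + 2^-1)])%R)%E.
  apply: meas_ge; first by lra.
  move=> t /andP[t0 t1]; split; first by apply/andP; split; lra.
  apply: vis => j ij [/= + _].
  have := xlt _ _ ij; rewrite ler_norml => ? /andP[? ?]; lra.
apply: (@lt_le_trans _ _ (0%:E + (1-0)%:E + 0%:E + (d/2 - 0)%:E + (1-0)%:E)%E).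
  rewrite -!EFinD lte_fin; lra.
apply: leeD; last exact: L.
apply: leeD; last exact: T.
apply: leeD; last exact: meas_ge0.
apply: leeD; last exact: B.
done.
Qed.
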